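(* Let $A\in\mathbb{R}^{m\times N}$ with $N=pn$, and let $\mathbf{x}\in\mathbb{R}^N$ be block $k$-sparse, i.e. $\lVert\mathbf{x}\rVert_{2,0}\le k$. Suppose there exists at least one $q\in(1,\infty]$ such that $$k<\min_{\mathbf{z}\in\ker A\setminus\{\mathbf{0}\}} 2^{\frac{q}{1-q}}\,k_q(\mathbf{z}).$$ Then the unique solution of the noise-free block basis pursuit problem $$\min_{\mathbf{z}\in\mathbb{R}^N}\lVert\mathbf{z}\rVert_{2,1}\quad\text{s.t.}\quad A\mathbf{z}=A\mathbf{x}$$ is $\mathbf{x}$.
   Context: Every $\mathbf{x}\in\mathbb{R}^N$ is partitioned into $p$ consecutive blocks of length $n$: $\mathbf{x}=[\mathbf{x}_1^T,\dots,\mathbf{x}_p^T]^T$ with $\mathbf{x}_i\in\mathbb{R}^n$. Mixed norms: $\lVert\mathbf{x}\rVert_{2,0}=\#\{i:\mathbf{x}_i\neq\mathbf{0}\}$, $\lVert\mathbf{x}\rVert_{2,q}=(\sum_{i=1}^p\lVert\mathbf{x}_i\rVert_2^q)^{1/q}$ for $0<q<\infty$, $\lVert\mathbf{x}\rVert_{2,\infty}=\max_i\lVert\mathbf{x}_i\rVert_2$. For nonzero $\mathbf{x}$ and $q\in(1,\infty)$ the $q$-ratio block sparsity is $k_q(\mathbf{x})=\left(\lVert\mathbf{x}\rVert_{2,1}/\lVert\mathbf{x}\rVert_{2,q}\right)^{q/(q-1)}$, and $k_\infty(\mathbf{x})=\lVert\mathbf{x}\rVert_{2,1}/\lVert\mathbf{x}\rVert_{2,\infty}$.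 For $q=\infty$ the exponent $q/(1-q)$ is interpreted as its limit $-1$ (and $q/(q-1)$ as $1$). $\ker A=\{\mathbf{z}:A\mathbf{z}=\mathbf{0}\}$. *)

(* Defs.v *)
From mathcomp Require Import all_boot all_order all_algebra.
From mathcomp Require Import all_classical all_reals all_analysis.
Set Implicit Arguments. Unset Strict Implicit. Unset Printing Implicit Defensive.
Import Order.TTheory GRing.Theory Num.Theory.
Local Open Scope ring_scope.

Section BlockNorms.
Variables (R : realType) (p n : nat).

(* index of entry j of block i in R^(p*n): i*n + j *)
Lemma blk_idx_proof (i : 'I_p) (j : 'I_n) : (i * n + j < p * n)%N.
Proof.
case: i j => i Hi [j Hj] /=.
apply: (@leq_trans ((i.+1) * n)); first by rewrite mulSn addnC ltn_add2r.
by rewrite leq_mul2r Hi orbT.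
Qed.

Definition blk_idx (i : 'I_p) (j : 'I_n) : 'I_(p * n) := Ordinal (blk_idx_proof i j).

Definition block (x : 'cV[R]_(p * n)) (i : 'I_p) : 'cV[R]_n :=
  \col_(j < n) x (blk_idx i j) 0.

Definition bnorm (x : 'cV[R]_(p * n)) (i : 'I_p) : R :=
  Num.sqrt (\sum_(j < n) (block x i j 0) ^+ 2).

Definition norm20 (x : 'cV[R]_(p * n)) : nat := #|[set i : 'I_p | block x i != 0]|.

Definition norm2q (q : R) (x : 'cV[R]_(p * n)) : R :=
  powR (\sum_(i < p) powR (bnorm x i) q) q^-1.

Definition norm21 (x : 'cV[R]_(p * n)) : R := \sum_(i < p) bnorm x i.

Definition norm2inf (x : 'cV[R]_(p * n)) : R := \big[Num.max/0]_(i < p) bnorm x i.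

Definition kq (q : \bar R) (x : 'cV[R]_(p * n)) : R :=
  match q with
  | EFin r => powR (norm21 x / norm2q r x) (r / (r - 1))
  | +oo%E => norm21 x / norm2inf x
  | -oo%E => 0
  end.

Definition two_pow_q (q : \bar R) : R :=
  match q with
  | EFin r => powR 2 (r / (1 - r))
  | +oo%E => 2^-1
  | -oo%E => 0
  end.

End BlockNorms.

(* Main.v *)
Require Import Defs.
From mathcomp Require Import all_boot all_order all_algebra.
From mathcomp Require Import all_classical all_reals all_analysis.
From mathcomp Require Import ring lra.
Import Order.TTheory GRing.Theory Num.Theory.
Local Open Scope classical_set_scope.
Local Open Scope ring_scope.

Set Implicit Arguments. Unset Strict Implicit.
Section Aux.
Variable R : realType.

Lemma powRV (x r : R) : 0 <= x -> x^-1 `^ r = (x `^ r)^-1.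
Proof.
move=> x0; rewrite -(powR_inv1 x0) -powRrM mulrC powRrM powR_inv1 //.
exact: powR_ge0.
Qed.

Lemma powR_invK (s P : R) : 0 <= s -> P != 0 -> (s `^ P^-1) `^ P = s.
Proof. by move=> s0 P0; rewrite -powRrM mulVf // powRr1. Qed.

Lemma sum_powR_zero (I : finType) (a : I -> R) (P : R) :
  (forall i, 0 <= a i) -> 0 < P ->
  (\sum_i a i `^ P) `^ P^-1 = 0 -> forall i, a i = 0.
Proof.
move=> a0 P0 /powR_eq0_eq0 H i.
have := @psumr_eq0P R I predT (fun i => a i `^ P) (fun i _ => powR_ge0 (a i) P) H i isT.
exact: powR_eq0_eq0.
Qed.

Lemma hoelder_fin (I : finType) (a b : I -> R) (P Q : R) :
  (forall i, 0 <= a i) -> (forall i, 0 <= b i) -> 0 < P -> 0 < Q ->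
  P^-1 + Q^-1 = 1 ->
  \sum_i a i * b i <= (\sum_i a i `^ P) `^ P^-1 * (\sum_i b i `^ Q) `^ Q^-1.
Proof.
move=> a0 b0 P0 Q0 PQ.
set SA := \sum_i a i `^ P; set SB := \sum_i b i `^ Q.
have SA0 : 0 <= SA by apply: sumr_ge0 => i _; exact: powR_ge0.
have SB0 : 0 <= SB by apply: sumr_ge0 => i _; exact: powR_ge0.
have [A0|Apos] := eqVneq (SA `^ P^-1) 0.
  rewrite A0 mul0r big1 // => i _.
  by rewrite (sum_powR_zero a0 P0 A0) mul0r.
have [B0|Bpos] := eqVneq (SB `^ Q^-1) 0.
  rewrite B0 mulr0 big1 // => i _.
  by rewrite (sum_powR_zero b0 Q0 B0) mulr0.
set A := SA `^ P^-1 in Apos *; set B := SB `^ Q^-1 in Bpos *.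
have Ag : 0 < A by rewrite lt_def Apos powR_ge0.
have Bg : 0 < B by rewrite lt_def Bpos powR_ge0.
have SAn : SA != 0 by apply: contra Apos => /eqP E; rewrite /A E powR0 // invr_neq0 // gt_eqF.
have SBn : SB != 0 by apply: contra Bpos => /eqP E; rewrite /B E powR0 // invr_neq0 // gt_eqF.
have AP : A `^ P = SA by rewrite /A powR_invK ?gt_eqF.
have BQ : B `^ Q = SB by rewrite /B powR_invK ?gt_eqF.
clearbody A B.
have key i : a i / A * (b i / B) <= a i `^ P / SA / P + b i `^ Q / SB / Q.
  have := conjugate_powR (divr_ge0 (a0 i) (ltW Ag)) (divr_ge0 (b0 i) (ltW Bg)) P0 Q0 PQ.
  have e1 : (a i / A) `^ P = a i `^ P / SA.
    rewrite powRM //; last by rewrite invr_ge0 ltW.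
    by rewrite powRV ?AP //; exact: ltW.
  have e2 : (b i / B) `^ Q = b i `^ Q / SB.
    rewrite powRM //; last by rewrite invr_ge0 ltW.
    by rewrite powRV ?BQ //; exact: ltW.
  by rewrite e1 e2.
have H : \sum_i (a i / A * (b i / B)) <= 1.
  apply: le_trans (ler_sum _ (fun i _ => key i)) _.
  rewrite big_split /= -!mulr_suml -/SA -/SB !mulfV // !mul1r PQ //.
have E : \sum_i (a i / A * (b i / B)) = (\sum_i a i * b i) / (A * B).
  rewrite mulr_suml; apply: eq_bigr => i _.
  by rewrite invfM mulrACA.
rewrite E ler_pdivrMr ?mulr_gt0 // mul1r in H.
exact: H.
Qed.


Lemma mink (m : nat) (u v : 'I_m -> R) :
  Num.sqrt (\sum_j (u j + v j) ^+ 2) <=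
  Num.sqrt (\sum_j u j ^+ 2) + Num.sqrt (\sum_j v j ^+ 2).
Proof.
have sq0 (w : 'I_m -> R) : 0 <= \sum_j w j ^+ 2.
  by apply: sumr_ge0 => j _; exact: sqr_ge0.
have eqs (w : 'I_m -> R) : (\sum_j `|w j| `^ 2) `^ 2^-1 = Num.sqrt (\sum_j w j ^+ 2).
  rewrite powR12_sqrt; last by apply: sumr_ge0 => j _; exact: powR_ge0.
  congr Num.sqrt; apply: eq_bigr => j _.
  by rewrite (@powR_mulrn _ _ 2 (normr_ge0 (w j))) real_normK // num_real.
have CS : \sum_j u j * v j <= Num.sqrt (\sum_j u j ^+ 2) * Num.sqrt (\sum_j v j ^+ 2).
  apply: (@le_trans _ _ (\sum_j `|u j| * `|v j|)).
    by apply: ler_sum => j _; rewrite -normrM; exact: ler_norm.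
  have h2 : (2:R)^-1 + 2^-1 = 1 by field.
  rewrite -!eqs; apply: hoelder_fin => //; by move=> j; exact: normr_ge0.
have H : \sum_j (u j + v j) ^+ 2 <=
    (Num.sqrt (\sum_j u j ^+ 2) + Num.sqrt (\sum_j v j ^+ 2)) ^+ 2.
  under eq_bigr => j _ do rewrite sqrrD.
  rewrite !big_split /= sqrrD !sqr_sqrtr //.
  by rewrite lerD2r lerD2l ?mulr2n lerD.
rewrite -(ger0_norm (addr_ge0 (sqrtr_ge0 _) (sqrtr_ge0 _))) -sqrtr_sqr.
exact: ler_wsqrtr.
Qed.


Lemma sum_gt0 (I : finType) (b : I -> R) (i0 : I) :
  (forall i, 0 <= b i) -> 0 < b i0 -> 0 < \sum_i b i.
Proof.
move=> b0 bi0; rewrite (bigD1 i0) //=.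
have : 0 <= \sum_(i | i != i0) b i by apply: sumr_ge0 => i _.
move=> h; lra.
Qed.

Variables p n : nat.
Implicit Types x y z : 'cV[R]_(p * n).

Lemma bnormE x i : bnorm x i = Num.sqrt (\sum_j (x (blk_idx i j) 0) ^+ 2).
Proof. by rewrite /bnorm; congr Num.sqrt; apply: eq_bigr => j _; rewrite mxE. Qed.

Lemma bnorm_ge0 x i : 0 <= bnorm x i.
Proof. exact: sqrtr_ge0. Qed.

Lemma bnormD x y i : bnorm (x + y) i <= bnorm x i + bnorm y i.
Proof.
rewrite !bnormE; under eq_bigr => j _ do rewrite mxE.
exact: mink.
Qed.

Lemma bnormN x i : bnorm (- x) i = bnorm x i.
Proof.
by rewrite !bnormE; congr Num.sqrt; apply: eq_bigr => j _; rewrite mxE sqrrN.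
Qed.

Lemma bnorm_ext x y i : (forall j, x (blk_idx i j) 0 = y (blk_idx i j) 0) ->
  bnorm x i = bnorm y i.
Proof.
by move=> H; rewrite !bnormE; congr Num.sqrt; apply: eq_bigr => j _; rewrite H.
Qed.

Lemma bnorm_gt0 x i j : x (blk_idx i j) 0 != 0 -> 0 < bnorm x i.
Proof.
move=> H; rewrite bnormE sqrtr_gt0.
apply: (@sum_gt0 _ (fun j => x (blk_idx i j) 0 ^+ 2) j).
  by move=> k; exact: sqr_ge0.
by rewrite lt_def sqr_ge0 sqrf_eq0 H.
Qed.

Lemma exists_block x : x != 0 -> exists i, 0 < bnorm x i.
Proof.
move=> Hx.
have [t Ht] : exists t : 'I_(p * n), x t 0 != 0.
  apply/existsP; apply: contraNT Hx => /existsPn H.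
  apply/eqP/matrixP => a b; rewrite (ord1 b) mxE.
  by move: (H a); rewrite negbK => /eqP.
case: t Ht => t tlt Ht.
have n0 : (0 < n)%N by move: (tlt); case: (n) => //; rewrite muln0.
have ip : (t %/ n < p)%N by rewrite ltn_divLR.
exists (Ordinal ip).
apply: (@bnorm_gt0 _ _ (Ordinal (ltn_pmod t n0))).
suff -> : blk_idx (Ordinal ip) (Ordinal (ltn_pmod t n0)) = Ordinal tlt by [].
by apply: val_inj => /=; rewrite -divn_eq.
Qed.

End Aux.

Unset Implicit Arguments. Set Strict Implicit.

Theorem proposition1 (R : realType) (m p n k : nat)
    (A : 'M[R]_(m, p * n)) (x : 'cV[R]_(p * n)) :
  (norm20 x <= k)%N ->
  (exists q : \bar R, (1 < q)%E /\
     ((k%:R)%:E < ereal_inf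
        [set (two_pow_q q * kq q z)%:E | z in [set z : 'cV[R]_(p * n) | (A *m z = 0 /\ z != 0)%R]])%E) ->
  [set z : 'cV[R]_(p * n) | A *m z = A *m x /\
     forall w : 'cV[R]_(p * n), A *m w = A *m x -> norm21 z <= norm21 w] = [set x].
Proof.
move=> Hk [q [q1 Hinf]].
set S := [set i : 'I_p | block x i != 0]%SET.
have cardS : (#|S| <= k)%N by [].
have xoff i : i \notin S -> forall j, x (blk_idx i j) 0 = 0.
  rewrite inE negbK => /eqP H j.
  by have := congr1 (fun M : 'cV[R]_n => M j 0) H; rewrite !mxE.
have key z : A *m z = 0 -> z != 0 -> 2 * \sum_(i in S) bnorm z i < norm21 z.
  move=> Az z0.
  have Hlt : ((k%:R)%:E < (two_pow_q q * kq q z)%:E)%E.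
    apply: (lt_le_trans Hinf); apply: ge_ereal_inf.
    by exists (two_pow_q q * kq q z)%:E => //; exists z.
  rewrite lte_fin in Hlt.
  have [i0 bi0] := exists_block z0.
  have N1pos : 0 < norm21 z.
    by apply: (@sum_gt0 _ _ (bnorm z) i0) => // i; exact: bnorm_ge0.
  have b0 i : 0 <= bnorm z i by exact: bnorm_ge0.
  case: q q1 Hlt {Hinf} => [r| |] q1 Hlt //=; last first.
    set N1 := norm21 z in N1pos Hlt *.
    set Ninf := norm2inf z in Hlt.
    have bi_le i : bnorm z i <= Ninf by exact: le_bigmax.
    have Ninfpos : 0 < Ninf := lt_le_trans bi0 (bi_le i0).
    have HT : \sum_(i in S) bnorm z i <= k%:R * Ninf.
      apply: le_trans (ler_sum _ (fun i _ => bi_le i)) _.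
      rewrite sumr_const -[Ninf *+ _]mulr_natl; apply: ler_wpM2r; [exact: ltW | by rewrite ler_nat].
    move: Hlt; rewrite mulrA ltr_pdivlMr // => Hlt.
    rewrite -/N1 -/Ninf /two_pow_q in Hlt.
    lra.
  rewrite lte_fin in q1.
  have r0 : 0 < r by lra.
  set Q := r / (r - 1).
  have Q0 : 0 < Q by rewrite /Q divr_gt0 // subr_gt0.
  have rQ : r^-1 + Q^-1 = 1.
    by rewrite /Q invf_div; field; rewrite gt_eqF.
  set N1 := norm21 z in N1pos Hlt *.
  set Nq := norm2q r z in Hlt *.
  have Nqpos : 0 < Nq.
    rewrite /Nq /norm2q; apply: powR_gt0.
    apply: (@sum_gt0 _ _ (fun i => bnorm z i `^ r) i0) => [i|]; first exact: powR_ge0.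
    exact: powR_gt0.
  set kk := (k%:R : R) `^ Q^-1.
  have HT : \sum_(i in S) bnorm z i <= Nq * kk.
    have E1 : \sum_(i in S) bnorm z i = \sum_i bnorm z i * ((i \in S)%:R : R).
      rewrite big_mkcond /=; apply: eq_bigr => i _.
      by case: (i \in S); rewrite ?mulr1 ?mulr0.
    have E2 : \sum_i ((i \in S)%:R : R) `^ Q = #|S|%:R.
      rewrite (eq_bigr (fun i => if i \in S then 1 else 0)); last first.
        move=> i _; case: (i \in S); first by rewrite powR1.
        by rewrite powR0 // gt_eqF.
      by rewrite -big_mkcond /= sumr_const.
    rewrite E1.
    apply: le_trans (@hoelder_fin R _ (bnorm z) (fun i => (i \in S)%:R) r Q b0 _ r0 Q0 rQ) _.
      by move=> i; rewrite ler0n.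
    rewrite E2; apply: ler_wpM2l; first exact: ltW.
    apply: ge0_ler_powR; [by rewrite invr_ge0 ltW | by rewrite nnegrE ler0n | by rewrite nnegrE ler0n | by rewrite ler_nat].
  have e : r / (1 - r) = - Q by rewrite /Q -mulrN -invrN opprB.
  move: Hlt; rewrite /two_pow_q /kq -/N1 -/Nq -/Q e powRN => Hlt.
  set c := N1 / Nq / 2.
  have c0 : 0 <= c by rewrite /c !divr_ge0 // ltW.
  have cdef : (2 `^ Q)^-1 * (N1 / Nq) `^ Q = c `^ Q.
    rewrite /c (powRM Q (divr_ge0 (ltW N1pos) (ltW Nqpos))); last by rewrite invr_ge0. by rewrite powRV // mulrC.
  rewrite cdef in Hlt.
  have kc : kk < c.
    rewrite ltNge; apply/negP => hc.
    have cn : c \is Num.nneg by rewrite nnegrE.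
    have kn : kk \is Num.nneg by rewrite nnegrE powR_ge0.
    have := ge0_ler_powR (ltW Q0) cn kn hc.
    rewrite /kk powR_invK ?ler0n ?gt_eqF // => h.
    by have := lt_le_trans Hlt h; rewrite ltxx.
  have h3 : Nq * kk < Nq * c by rewrite ltr_pM2l.
  have h4 : Nq * c = N1 / 2 by rewrite /c; field; rewrite gt_eqF.
  lra.
have strict w : A *m w = A *m x -> w != x -> norm21 x < norm21 w.
  move=> Aw wx.
  have Az : A *m (w - x) = 0 by rewrite mulmxBr Aw subrr.
  have z0 : w - x != 0 by rewrite subr_eq0.
  have K := key _ Az z0.
  rewrite /norm21 in K *.
  rewrite [X in _ < X](bigID (fun i => i \in S)) /= in K.
  rewrite (bigID (fun i => i \in S)) /= [X in _ < X](bigID (fun i => i \in S)) /=.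
  have off : \sum_(i | i \notin S) bnorm x i = 0.
    apply: big1 => i iS; rewrite bnormE big1 ?sqrtr0 // => j _.
    by rewrite xoff // expr0n.
  have off2 : \sum_(i | i \notin S) bnorm w i = \sum_(i | i \notin S) bnorm (w - x) i.
    apply: eq_bigr => i iS; apply: bnorm_ext => j.
    by rewrite !mxE xoff // subr0.
  have on : \sum_(i in S) bnorm x i <= \sum_(i in S) bnorm w i + \sum_(i in S) bnorm (w - x) i.
    rewrite -big_split /=; apply: ler_sum => i _.
    have e : w + (x - w) = x by rewrite addrCA subrr addr0.
    by have := bnormD w (x - w) i; rewrite e -opprB bnormN.
  rewrite off off2 addr0.
  set a := \sum_(i in S) bnorm x i in on *.
  set b := \sum_(i in S) bnorm w i in on *.
  set c := \sum_(i in S) bnorm (w - x) i in on K *.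
  set d := \sum_(i | i \notin S) bnorm (w - x) i in K *.
  clear -on K.
  lra.
apply/seteqP; split => [z [Az Hmin] | z /= ->].
  apply/eqP; apply/negPn/negP => zx.
  have h1 := strict z Az zx.
  have h2 := Hmin x erefl.
  by rewrite ltNge h2 in h1.
split => // w Aw.
have [->//|wx] := eqVneq w x.
exact: ltW (strict w Aw wx).
Qed.
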